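(* Let $H:[0,1]\times\mathbb R\to\mathbb R$ be continuous, coercive in $p$, and quasiconvex in $p$ with $\mathrm{Int}\{p: H(s,p)\le b\}=\{p:H(s,p)<b\}$ for all $s,b$. Let $a_H=\max_s\min_pH(s,p)$ and let $c_H$ be the minimum of those $a\in\mathbb R$ for which $H(s,u')=a$ admits a viscosity subsolution $u$ in $(0,1)$, continuous on $[0,1]$, with $u(0)=u(1)$ (a periodic subsolution). Assume that either $c_H>a_H$, or $s\mapsto\min_pH(s,p)$ is constant on $[0,1]$. With $\sigma^\pm_{c_H}(s)$ the largest/smallest $p$ with $H(s,p)=c_H$, one has $$\min\Big\{-\int_0^1\sigma^-_{c_H}(t)\,dt,\ \int_0^1\sigma^+_{c_H}(t)\,dt\Big\}=0 .$$
   Context: Coercive: $H(s,p)\to+\infty$ as $|p|\to\infty$ uniformly in $s$; quasiconvex: convex sublevel sets in $p$. The minimum defining $c_H$ exists and $c_H\ge a_H$. *)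

(* Defs.v *)
From Stdlib Require Import Reals Lra.
Open Scope R_scope.

Definition I01 (s : R) : Prop := 0 <= s <= 1.

Definition JointCont (H : R -> R -> R) : Prop :=
  forall s p, I01 s -> forall eps, 0 < eps -> exists delta, 0 < delta /\
    forall s' p', I01 s' -> Rabs (s' - s) < delta -> Rabs (p' - p) < delta ->
      Rabs (H s' p' - H s p) < eps.

Definition Coercive (H : R -> R -> R) : Prop :=
  forall M, exists K, forall s p, I01 s -> K < Rabs p -> M < H s p.

Definition QuasiConvex (H : R -> R -> R) : Prop :=
  forall s b p q t, I01 s -> H s p <= b -> H s q <= b -> 0 <= t <= 1 ->
    H s (t * p + (1 - t) * q) <= b.

Definition interior (A : R -> Prop) (p : R) : Prop :=
  exists eps, 0 < eps /\ forall q, Rabs (q - p) < eps -> A q.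

Definition InteriorCond (H : R -> R -> R) : Prop :=
  forall s b p, I01 s -> (interior (fun q => H s q <= b) p <-> H s p < b).

Definition IsMinOver (A : R -> Prop) (f : R -> R) (m : R) : Prop :=
  (exists x, A x /\ f x = m) /\ (forall x, A x -> m <= f x).

Definition IsMaxOver (A : R -> Prop) (f : R -> R) (m : R) : Prop :=
  (exists x, A x /\ f x = m) /\ (forall x, A x -> f x <= m).

Definition ContOn01 (u : R -> R) : Prop :=
  forall s, I01 s -> forall eps, 0 < eps -> exists delta, 0 < delta /\
    forall t, I01 t -> Rabs (t - s) < delta -> Rabs (u t - u s) < eps.

Definition C1 (phi : R -> R) : Prop :=
  exists dphi : R -> R, (forall x, derivable_pt_lim phi x (dphi x)) /\ continuity dphi.

Definition ViscSub (H : R -> R -> R) (a : R) (u : R -> R) : Prop :=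
  forall (s : R) (phi : R -> R) (dphi : R -> R),
    0 < s < 1 ->
    (forall x, derivable_pt_lim phi x (dphi x)) -> continuity dphi ->
    (exists delta, 0 < delta /\ forall t, 0 < t < 1 -> Rabs (t - s) < delta ->
        u t - phi t <= u s - phi s) ->
    H s (dphi s) <= a.

Definition AdmitsPeriodicSub (H : R -> R -> R) (a : R) : Prop :=
  exists u : R -> R, ContOn01 u /\ u 0 = u 1 /\ ViscSub H a u.

(* Main.v *)
Require Import Defs.
From Stdlib Require Import Reals Lra.
From Coquelicot Require Import Coquelicot.
Open Scope R_scope.

Lemma cont_eps (f : R -> R) x :
  (forall eps, 0 < eps -> exists d, 0 < d /\ forall y, Rabs (y - x) < d -> Rabs (f y - f x) < eps) ->
  continuity_pt f x.
Proof.
  intros Hf eps Heps. destruct (Hf eps Heps) as [d [Hd Hy]].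
  exists d; split; [lra|]. intros y [_ Hy2]. apply Hy. exact Hy2.
Qed.

Definition clamp (x : R) : R := Rmin 1 (Rmax 0 x).

Lemma clamp_I01 x : I01 (clamp x).
Proof. unfold clamp, I01, Rmin, Rmax. repeat destruct Rle_dec; lra. Qed.

Lemma clamp_id x : I01 x -> clamp x = x.
Proof. unfold clamp, I01, Rmin, Rmax. intros. repeat destruct Rle_dec; lra. Qed.

Lemma clamp_lip x y : Rabs (clamp x - clamp y) <= Rabs (x - y).
Proof.
  unfold clamp, Rmin, Rmax. repeat destruct Rle_dec;
  unfold Rabs; repeat destruct Rcase_abs; lra.
Qed.

Definition ext (f : R -> R) x := f (clamp x).

Lemma ext_cont f : ContOn01 f -> forall x, continuity_pt (ext f) x.
Proof.
  intros Hf x. apply cont_eps. intros eps Heps.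
  destruct (Hf (clamp x) (clamp_I01 x) eps Heps) as [d [Hd Hy]].
  exists d; split; [lra|]. intros y Hyx. unfold ext. apply Hy.
  apply clamp_I01. pose proof (clamp_lip y x). lra.
Qed.

Lemma ext_id f x : I01 x -> ext f x = f x.
Proof. intros; unfold ext; rewrite clamp_id; auto. Qed.

Lemma cont_ContOn01 f : (forall x, continuity_pt f x) -> ContOn01 f.
Proof.
  intros Hf s _ eps Heps. destruct (Hf s eps Heps) as [d [Hd Hy]].
  exists d; split; [lra|]. intros t _ Ht.
  destruct (Req_dec t s) as [->|Hne].
  - rewrite Rminus_diag, Rabs_R0; lra.
  - apply (Hy t). split; [split; [exact I| auto]| exact Ht].
Qed.

Lemma QC_between H : QuasiConvex H -> forall s x y z, I01 s -> x <= y <= z ->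
  H s y <= Rmax (H s x) (H s z).
Proof.
  intros Hqc s x y z Hs [Hxy Hyz].
  destruct (Req_dec x z) as [Exz|Nxz].
  - assert (y = x) by lra. subst. apply Rmax_l.
  - set (t := (z - y) / (z - x)).
    assert (Ht : 0 <= t <= 1).
    { unfold t; split.
      - apply Rmult_le_pos; [lra| apply Rlt_le, Rinv_0_lt_compat; lra].
      - apply (Rmult_le_reg_r (z - x)); [lra|]. unfold Rdiv.
        rewrite Rmult_assoc, Rinv_l; lra. }
    assert (Ey : y = t * x + (1 - t) * z).
    { unfold t. field_simplify; [|lra]. field. lra. }
    rewrite Ey. apply Hqc; auto; [apply Rmax_l | apply Rmax_r].
Qed.

Lemma Hcont_p H : JointCont H -> forall s, I01 s -> continuity (H s).
Proof.
  intros Hc s Hs p. apply cont_eps. intros eps Heps.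
  destruct (Hc s p Hs eps Heps) as [d [Hd Hy]]. exists d; split; auto.
  intros y Hy'. apply Hy; auto. rewrite Rminus_diag, Rabs_R0; lra.
Qed.
Section Lev.
Variable H : R -> R -> R.
Hypothesis Hcont : JointCont H.
Hypothesis Hcoer : Coercive H.
Hypothesis Hqc : QuasiConvex H.
Hypothesis Hint : InteriorCond H.
Variable c : R.
Variables sigp sigm : R -> R.
Hypothesis Hsigp : forall s, I01 s -> H s (sigp s) = c /\ (forall p, H s p = c -> p <= sigp s).
Hypothesis Hsigm : forall s, I01 s -> H s (sigm s) = c /\ (forall p, H s p = c -> sigm s <= p).

Lemma above s p : I01 s -> sigp s < p -> c < H s p.
Proof.
  intros Hs Hp. destruct (Rlt_le_dec c (H s p)) as [|Hle]; auto. exfalso.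
  destruct (Hcoer c) as [K HK].
  set (x := Rmax K p + 1).
  assert (Hx : c < H s x).
  { apply HK; auto. unfold x. pose proof (Rmax_l K p). pose proof (Rmax_r K p).
    unfold Rabs; destruct Rcase_abs; lra. }
  destruct (Req_dec (H s p) c) as [E|N].
  - pose proof (proj2 (Hsigp s Hs) p E). lra.
  - assert (px : p < x). { unfold x; pose proof (Rmax_r K p); lra. }
    destruct (IVT (fun q => H s q - c) p x) as [z [Hz Ez]]; auto.
    + apply continuity_minus; [apply Hcont_p; auto| apply continuity_const; intros ?? ; auto].
    + lra.
    + lra.
    + pose proof (proj2 (Hsigp s Hs) z ltac:(lra)). lra.
Qed.

Lemma below s p : I01 s -> p < sigm s -> c < H s p.
Proof.
  intros Hs Hp. destruct (Rlt_le_dec c (H s p)) as [|Hle]; auto. exfalso.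
  destruct (Hcoer c) as [K HK].
  set (x := Rmin (-K) p - 1).
  assert (Hx : c < H s x).
  { apply HK; auto. unfold x. pose proof (Rmin_l (-K) p). pose proof (Rmin_r (-K) p).
    unfold Rabs; destruct Rcase_abs; lra. }
  destruct (Req_dec (H s p) c) as [E|N].
  - pose proof (proj2 (Hsigm s Hs) p E). lra.
  - assert (px : x < p). { unfold x; pose proof (Rmin_r (-K) p); lra. }
    destruct (IVT (fun q => c - H s q) x p) as [z [Hz Ez]]; auto.
    + apply continuity_minus; [apply continuity_const; intros ?? ; auto| apply Hcont_p; auto].
    + lra.
    + lra.
    + pose proof (proj2 (Hsigm s Hs) z ltac:(lra)). lra.
Qed.

Lemma sig_le s : I01 s -> sigm s <= sigp s.
Proof. intros Hs. apply (proj2 (Hsigm s Hs)). apply (proj1 (Hsigp s Hs)). Qed.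

Lemma between s p : I01 s -> sigm s <= p <= sigp s -> H s p <= c.
Proof.
  intros Hs Hp. pose proof (QC_between H Hqc s (sigm s) p (sigp s) Hs Hp).
  rewrite (proj1 (Hsigp s Hs)), (proj1 (Hsigm s Hs)), Rmax_left in H0; lra.
Qed.

Lemma strict s p : I01 s -> sigm s < p < sigp s -> H s p < c.
Proof.
  intros Hs Hp. apply (proj1 (Hint s c p Hs)).
  exists (Rmin (p - sigm s) (sigp s - p)). split.
  - apply Rmin_pos; lra.
  - intros q Hq. apply between; auto.
    pose proof (Rmin_l (p - sigm s) (sigp s - p)). pose proof (Rmin_r (p - sigm s) (sigp s - p)).
    revert Hq; unfold Rabs; destruct Rcase_abs; intros; lra.
Qed.

End Lev.
Section ContHi.
Variable G : R -> R -> R.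
Hypothesis Gcont : JointCont G.
Hypothesis GQC : forall s x y z, I01 s -> x <= y <= z -> G s y <= Rmax (G s x) (G s z).
Variable c : R.
Variables hi lo : R -> R.
Hypothesis Ghi : forall s, I01 s -> G s (hi s) = c.
Hypothesis Gab : forall s p, I01 s -> hi s < p -> c < G s p.
Hypothesis Gbe : forall s p, I01 s -> p < lo s -> c < G s p.
Hypothesis Gst : forall s p, I01 s -> lo s < p < hi s -> G s p < c.
Hypothesis Glh : forall s, I01 s -> lo s <= hi s.

Lemma Gnear s p e : I01 s -> 0 < e -> exists d, 0 < d /\ forall t, I01 t -> Rabs (t - s) < d ->
  G s p - e < G t p < G s p + e.
Proof.
  intros Hs He. destruct (Gcont s p Hs e He) as [d [Hd Hy]]. exists d; split; auto.
  intros t Ht Hts. assert (Rabs (G t p - G s p) < e) by (apply Hy; auto; rewrite Rminus_diag, Rabs_R0; lra).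
  revert H; unfold Rabs; destruct Rcase_abs; intros; lra.
Qed.

Lemma hi_upper s eta : I01 s -> 0 < eta -> exists d, 0 < d /\ forall t, I01 t -> Rabs (t - s) < d ->
  hi t < hi s + eta.
Proof.
  intros Hs He. set (q := hi s).
  assert (H1 : c < G s (q + eta)) by (apply Gab; auto; unfold q; lra).
  set (e := (G s (q + eta) - c) / 2).
  assert (He' : 0 < e) by (unfold e; lra).
  destruct (Gnear s (q + eta) e Hs He') as [d1 [Hd1 P1]].
  destruct (Gnear s q e Hs He') as [d2 [Hd2 P2]].
  exists (Rmin d1 d2); split; [apply Rmin_pos; auto|].
  intros t Ht Hts. pose proof (Rmin_l d1 d2). pose proof (Rmin_r d1 d2).
  destruct (Rlt_le_dec (hi t) (q + eta)) as [|Hle]; auto. exfalso.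
  specialize (P1 t Ht ltac:(lra)). specialize (P2 t Ht ltac:(lra)).
  assert (Gq : G s q = c) by (apply Ghi; auto).
  pose proof (GQC t q (q + eta) (hi t) Ht ltac:(lra)).
  rewrite Ghi in H2; auto.
  unfold Rmax in H2; destruct Rle_dec; unfold e in *; lra.
Qed.

Lemma hi_lower s eta : I01 s -> 0 < eta -> exists d, 0 < d /\ forall t, I01 t -> Rabs (t - s) < d ->
  hi s - eta < hi t.
Proof.
  intros Hs He. set (q := hi s).
  destruct (Rlt_le_dec (lo s) q) as [Hlt|Hge].
  - set (p := Rmax ((lo s + q) / 2) (q - eta / 2)).
    assert (Hp : lo s < p < q /\ q - eta < p).
    { unfold p, Rmax; destruct Rle_dec; lra. }
    assert (Gp : G s p < c) by (apply Gst; auto; unfold q in Hp; lra).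
    destruct (Gnear s p (c - G s p) Hs ltac:(lra)) as [d [Hd P]].
    exists d; split; auto. intros t Ht Hts. specialize (P t Ht Hts).
    destruct (Rlt_le_dec (hi t) p) as [Hl|Hl].
    + pose proof (Gab t p Ht Hl). lra.
    + lra.
  - assert (Elo : lo s = q) by (pose proof (Glh s Hs); unfold q in *; lra).
    assert (H1 : c < G s (q - eta)) by (apply Gbe; auto; lra).
    set (e := (G s (q - eta) - c) / 2).
    assert (He' : 0 < e) by (unfold e; lra).
    destruct (Gnear s (q - eta) e Hs He') as [d1 [Hd1 P1]].
    destruct (Gnear s q e Hs He') as [d2 [Hd2 P2]].
    exists (Rmin d1 d2); split; [apply Rmin_pos; auto|].
    intros t Ht Hts. pose proof (Rmin_l d1 d2). pose proof (Rmin_r d1 d2).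
    destruct (Rlt_le_dec (q - eta) (hi t)) as [|Hle]; auto. exfalso.
    specialize (P1 t Ht ltac:(lra)). specialize (P2 t Ht ltac:(lra)).
    assert (Gq : G s q = c) by (apply Ghi; auto).
    pose proof (GQC t (hi t) (q - eta) q Ht ltac:(lra)).
    rewrite Ghi in H2; auto.
    unfold Rmax in H2; destruct Rle_dec; unfold e in *; lra.
Qed.

Lemma hi_cont : ContOn01 hi.
Proof.
  intros s Hs eps Heps.
  destruct (hi_upper s eps Hs Heps) as [d1 [Hd1 P1]].
  destruct (hi_lower s eps Hs Heps) as [d2 [Hd2 P2]].
  exists (Rmin d1 d2); split; [apply Rmin_pos; auto|].
  intros t Ht Hts. pose proof (Rmin_l d1 d2). pose proof (Rmin_r d1 d2).
  specialize (P1 t Ht ltac:(lra)). specialize (P2 t Ht ltac:(lra)).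
  unfold Rabs; destruct Rcase_abs; lra.
Qed.
End ContHi.
Lemma deriv_bound f x l C : 0 <= C ->
  (forall h, Rabs (f (x + h) - f x - h * l) <= C * (h * h)) -> derivable_pt_lim f x l.
Proof.
  intros HC Hb eps Heps.
  assert (Hd : 0 < eps / (C + 1)) by (apply Rdiv_lt_0_compat; lra).
  exists (mkposreal _ Hd). intros h Hh0 Hh. simpl in Hh.
  assert (Hah : 0 < Rabs h) by (apply Rabs_pos_lt; auto).
  replace ((f (x + h) - f x) / h - l) with ((f (x + h) - f x - h * l) / h) by (field; auto).
  unfold Rdiv. rewrite Rabs_mult, Rabs_inv.
  apply (Rmult_lt_reg_r (Rabs h)); auto. rewrite Rmult_assoc, Rinv_l by lra. rewrite Rmult_1_r.
  specialize (Hb h). assert (h * h = Rabs h * Rabs h).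
  { unfold Rabs; destruct Rcase_abs; ring. }
  rewrite H in Hb.
  assert (C * Rabs h < eps).
  { apply (Rmult_lt_reg_r (/(C+1))). apply Rinv_0_lt_compat; lra.
    apply Rle_lt_trans with (Rabs h). 
    - apply (Rmult_le_reg_r (C+1)); [lra|]. rewrite Rmult_assoc, Rinv_l by lra. nra.
    - unfold Rdiv in Hh. lra. }
  nra.
Qed.

Definition hup b t := Rmax 0 (t - b) * Rmax 0 (t - b).
Definition dhup b t := 2 * Rmax 0 (t - b).
Definition hdn a t := Rmax 0 (a - t) * Rmax 0 (a - t).
Definition dhdn a t := - (2 * Rmax 0 (a - t)).

Lemma hup_der b x : derivable_pt_lim (hup b) x (dhup b x).
Proof.
  apply (deriv_bound _ _ _ 2); [lra|]. intros h. unfold hup, dhup, Rmax.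
  repeat destruct Rle_dec; unfold Rabs; destruct Rcase_abs; nra.
Qed.

Lemma hdn_der a x : derivable_pt_lim (hdn a) x (dhdn a x).
Proof.
  apply (deriv_bound _ _ _ 2); [lra|]. intros h. unfold hdn, dhdn, Rmax.
  repeat destruct Rle_dec; unfold Rabs; destruct Rcase_abs; nra.
Qed.

Lemma dhup_cont b : continuity (dhup b).
Proof.
  intro x. apply cont_eps. intros eps He. exists (eps / 2). split; [lra|].
  intros y Hy. unfold dhup, Rmax. repeat destruct Rle_dec; revert Hy; unfold Rabs;
  repeat destruct Rcase_abs; intros; lra.
Qed.

Lemma dhdn_cont a : continuity (dhdn a).
Proof.
  intro x. apply cont_eps. intros eps He. exists (eps / 2). split; [lra|].
  intros y Hy. unfold dhdn, Rmax. repeat destruct Rle_dec; revert Hy; unfold Rabs;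
  repeat destruct Rcase_abs; intros; lra.
Qed.
Lemma cont_pt_eps f x : continuity_pt f x -> forall eps, 0 < eps ->
  exists d, 0 < d /\ forall y, Rabs (y - x) < d -> Rabs (f y - f x) < eps.
Proof.
  intros Hf eps He. destruct (Hf eps He) as [d [Hd P]]. exists d; split; [lra|].
  intros y Hy. destruct (Req_dec y x) as [->|N].
  - rewrite Rminus_diag, Rabs_R0; lra.
  - apply (P y). split; [split; [exact I|auto]|exact Hy].
Qed.

Lemma der_comb f g x l1 l2 e K : derivable_pt_lim f x l1 -> derivable_pt_lim g x l2 ->
  derivable_pt_lim (fun t => f t + e * t + K * g t) x (l1 + e + K * l2).
Proof.
  intros Hf Hg.
  apply (derivable_pt_lim_plus (fun t => f t + e * t) (fun t => K * g t)).
  - apply (derivable_pt_lim_plus f (fun t => e * t)); auto.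
    assert (D := derivable_pt_lim_scal id e x 1 (derivable_pt_lim_id x)).
    rewrite Rmult_1_r in D. exact D.
  - apply (derivable_pt_lim_scal g K x l2). auto.
Qed.

Lemma cont_comb f g e K : continuity f -> continuity g ->
  continuity (fun t => f t + e + K * g t).
Proof.
  intros Hf Hg. apply (continuity_plus (fun t => f t + e) (fun t => K * g t)).
  - apply (continuity_plus f (fun t => e)); auto. apply continuity_const. intros ??; auto.
  - apply (continuity_scal g K). auto.
Qed.

Section Mono.
Variable H : R -> R -> R.
Variable c : R.
Variable u : R -> R.
Hypothesis Hu : ContOn01 u.
Hypothesis Hvisc : ViscSub H c u.
Variables W om : R -> R.
Hypothesis HW : forall x, derivable_pt_lim W x (om x).
Hypothesis Hom : continuity om.

Let F t := ext u t - W t.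

Lemma F_cont x : continuity_pt F x.
Proof.
  unfold F. apply (continuity_pt_minus (ext u) W). apply ext_cont; auto.
  apply derivable_continuous_pt. exists (om x). apply HW.
Qed.

Lemma mono_up : (forall s p, 0 < s < 1 -> om s < p -> c < H s p) ->
  forall a b, 0 <= a -> a <= b -> b <= 1 -> u b - W b <= u a - W a.
Proof.
  intros Hab a b Ha Hab' Hb.
  replace (u b - W b) with (F b) by (unfold F; rewrite ext_id; auto; unfold I01; lra).
  replace (u a - W a) with (F a) by (unfold F; rewrite ext_id; auto; unfold I01; lra).
  destruct (Rle_lt_dec (F b) (F a)) as [|Hlt]; auto. exfalso.
  assert (Hab2 : a < b) by (destruct (Req_dec a b) as [->|]; lra).
  set (d0 := (F b - F a) / 2).
  destruct (cont_pt_eps F b (F_cont b) d0 ltac:(unfold d0; lra)) as [d [Hd Pd]].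
  set (b' := b - Rmin (d / 2) ((b - a) / 2)).
  assert (Hb' : a < b' < b /\ F a < F b').
  { pose proof (Rmin_l (d / 2) ((b - a) / 2)). pose proof (Rmin_r (d / 2) ((b - a) / 2)).
    assert (0 < Rmin (d / 2) ((b - a) / 2)) by (apply Rmin_pos; lra).
    specialize (Pd b'). unfold b' in *. split; [lra|].
    assert (Rabs (F (b - Rmin (d / 2) ((b - a) / 2)) - F b) < d0).
    { apply Pd. rewrite Rabs_left; lra. }
    revert H3; unfold Rabs; destruct Rcase_abs; unfold d0; intros; lra. }
  clearbody b'. destruct Hb' as [[Hab3 Hb3] HF].
  set (eps := (F b' - F a) / 2).
  set (K := (Rabs (F 1 - F b') + 1) / ((1 - b') * (1 - b'))).
  assert (HK : 0 <= K).
  { unfold K. apply Rmult_le_pos; [pose proof (Rabs_pos (F 1 - F b')); lra|].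
    apply Rlt_le, Rinv_0_lt_compat. nra. }
  assert (HK2 : K * ((1 - b') * (1 - b')) = Rabs (F 1 - F b') + 1).
  { unfold K. field. nra. }
  set (Gf := fun t => F t - eps * t - K * hup b' t).
  assert (Gc : forall x, continuity_pt Gf x).
  { intro x. unfold Gf. apply continuity_pt_minus.
    - apply continuity_pt_minus; [apply F_cont|].
      apply (continuity_pt_scal id eps x). apply derivable_continuous_pt, derivable_id.
    - apply (continuity_pt_scal (hup b') K x). apply derivable_continuous_pt.
      exists (dhup b' x). apply hup_der. }
  destruct (continuity_ab_maj Gf a 1 ltac:(lra) (fun x _ => Gc x)) as [s [Ms Hs]].
  assert (Gb : Gf b' = F b' - eps * b').
  { unfold Gf, hup, Rmax. destruct Rle_dec; try lra; try ring. }
  assert (Ga : Gf a = F a - eps * a).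
  { unfold Gf, hup, Rmax. destruct Rle_dec; try lra; try ring. }
  assert (G1 : Gf 1 = F 1 - eps - (Rabs (F 1 - F b') + 1)).
  { unfold Gf, hup, Rmax. destruct Rle_dec; try lra; try (rewrite <- HK2; ring). }
  pose proof (Ms b' ltac:(lra)) as Mb.
  assert (Hsa : a < s).
  { destruct (Req_dec s a) as [E|]; [|lra]. rewrite E in Mb. unfold eps in *. nra. }
  assert (Hs1 : s < 1).
  { destruct (Req_dec s 1) as [E|]; [|lra]. rewrite E in Mb.
    pose proof (Rle_abs (F 1 - F b')). unfold eps in *. nra. }
  assert (Hvs := Hvisc s (fun t => W t + eps * t + K * hup b' t)
      (fun t => om t + eps + K * dhup b' t) ltac:(lra)).
  assert (Hle : H s (om s + eps + K * dhup b' s) <= c).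
  { apply Hvs.
    - intro x. apply der_comb; [apply HW| apply hup_der].
    - apply cont_comb; auto. apply dhup_cont.
    - exists (Rmin (s - a) (1 - s)). split; [apply Rmin_pos; lra|].
      intros t Ht Hts. pose proof (Rmin_l (s - a) (1 - s)). pose proof (Rmin_r (s - a) (1 - s)).
      assert (a <= t <= 1) by (revert Hts; unfold Rabs; destruct Rcase_abs; intros; lra).
      pose proof (Ms t H2). unfold Gf, F in H3. rewrite !ext_id in H3; try (unfold I01; lra).
      all: try lra. }
  assert (0 <= K * dhup b' s) by (apply Rmult_le_pos; auto; unfold dhup; pose proof (Rmax_l 0 (s - b')); lra).
  assert (0 < eps) by (unfold eps; lra).
  pose proof (Hab s (om s + eps + K * dhup b' s) ltac:(lra) ltac:(lra)). lra.
Qed.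

Lemma mono_dn : (forall s p, 0 < s < 1 -> p < om s -> c < H s p) ->
  forall a b, 0 <= a -> a <= b -> b <= 1 -> u a - W a <= u b - W b.
Proof.
  intros Hbe a b Ha Hab' Hb.
  replace (u b - W b) with (F b) by (unfold F; rewrite ext_id; auto; unfold I01; lra).
  replace (u a - W a) with (F a) by (unfold F; rewrite ext_id; auto; unfold I01; lra).
  destruct (Rle_lt_dec (F a) (F b)) as [|Hlt]; auto. exfalso.
  assert (Hab2 : a < b) by (destruct (Req_dec a b) as [->|]; lra).
  set (d0 := (F a - F b) / 2).
  destruct (cont_pt_eps F a (F_cont a) d0 ltac:(unfold d0; lra)) as [d [Hd Pd]].
  set (a' := a + Rmin (d / 2) ((b - a) / 2)).
  assert (Ha' : a < a' < b /\ F b < F a').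
  { pose proof (Rmin_l (d / 2) ((b - a) / 2)). pose proof (Rmin_r (d / 2) ((b - a) / 2)).
    assert (0 < Rmin (d / 2) ((b - a) / 2)) by (apply Rmin_pos; lra).
    specialize (Pd a'). unfold a' in *. split; [lra|].
    assert (Rabs (F (a + Rmin (d / 2) ((b - a) / 2)) - F a) < d0).
    { apply Pd. rewrite Rabs_right; lra. }
    revert H3; unfold Rabs; destruct Rcase_abs; unfold d0; intros; lra. }
  clearbody a'. destruct Ha' as [[Hab3 Hb3] HF].
  set (eps := (F a' - F b) / 2).
  set (K := (Rabs (F 0 - F a') + 1) / (a' * a')).
  assert (HK : 0 <= K).
  { unfold K. apply Rmult_le_pos; [pose proof (Rabs_pos (F 0 - F a')); lra|].
    apply Rlt_le, Rinv_0_lt_compat. nra. }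
  assert (HK2 : K * (a' * a') = Rabs (F 0 - F a') + 1).
  { unfold K. field. nra. }
  set (Gf := fun t => F t + eps * t - K * hdn a' t).
  assert (Gc : forall x, continuity_pt Gf x).
  { intro x. unfold Gf. apply continuity_pt_minus.
    - apply continuity_pt_plus; [apply F_cont|].
      apply (continuity_pt_scal id eps x). apply derivable_continuous_pt, derivable_id.
    - apply (continuity_pt_scal (hdn a') K x). apply derivable_continuous_pt.
      exists (dhdn a' x). apply hdn_der. }
  destruct (continuity_ab_maj Gf 0 b ltac:(lra) (fun x _ => Gc x)) as [s [Ms Hs]].
  assert (Ga : Gf a' = F a' + eps * a').
  { unfold Gf, hdn, Rmax. destruct Rle_dec; try lra; try ring. }
  assert (Gb : Gf b = F b + eps * b).
  { unfold Gf, hdn, Rmax. destruct Rle_dec; try lra; try ring. }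
  assert (G0 : Gf 0 = F 0 - (Rabs (F 0 - F a') + 1)).
  { unfold Gf, hdn, Rmax. destruct Rle_dec; try lra; try (rewrite <- HK2; ring). }
  pose proof (Ms a' ltac:(lra)) as Mb.
  assert (Hsb : s < b).
  { destruct (Req_dec s b) as [E|]; [|lra]. rewrite E in Mb. unfold eps in *. nra. }
  assert (Hs0 : 0 < s).
  { destruct (Req_dec s 0) as [E|]; [|lra]. rewrite E in Mb.
    pose proof (Rle_abs (F 0 - F a')) as A1. pose proof (Rle_abs (- (F 0 - F a'))) as A2.
    rewrite Rabs_Ropp in A2. unfold eps in *. nra. }
  assert (Hvs := Hvisc s (fun t => W t + (- eps) * t + K * hdn a' t)
      (fun t => om t + (- eps) + K * dhdn a' t) ltac:(lra)).
  assert (Hle : H s (om s + - eps + K * dhdn a' s) <= c).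
  { apply Hvs.
    - intro x. apply der_comb; [apply HW| apply hdn_der].
    - apply cont_comb; auto. apply dhdn_cont.
    - exists (Rmin s (b - s)). split; [apply Rmin_pos; lra|].
      intros t Ht Hts. pose proof (Rmin_l s (b - s)). pose proof (Rmin_r s (b - s)).
      assert (0 <= t <= b) by (revert Hts; unfold Rabs; destruct Rcase_abs; intros; lra).
      pose proof (Ms t H2). unfold Gf, F in H3. rewrite !ext_id in H3; try (unfold I01; lra).
      all: try lra. }
  assert (K * dhdn a' s <= 0).
  { unfold dhdn. pose proof (Rmax_l 0 (a' - s)). nra. }
  assert (0 < eps) by (unfold eps; lra).
  pose proof (Hbe s (om s + - eps + K * dhdn a' s) ltac:(lra) ltac:(lra)). lra.
Qed.

End Mono.
Lemma Wder f : continuity f -> forall x, derivable_pt_lim (fun x => RInt f 0 x) x (f x).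
Proof.
  intros Hf x. apply is_derive_Reals.
  assert (Hc : forall z, continuous f z) by (intro z; apply continuity_pt_filterlim; apply Hf).
  apply (is_derive_RInt f (fun x => RInt f 0 x) 0 x).
  - apply filter_forall. intro b.
    exact (RInt_correct (V := R_CompleteNormedModule) f 0 b
      (ex_RInt_continuous (V := R_CompleteNormedModule) f 0 b (fun z _ => Hc z))).
  - auto.
Qed.

Lemma Wint f : ContOn01 f -> exists pr : Riemann_integrable f 0 1, RiemannInt pr = RInt (ext f) 0 1.
Proof.
  intros Hf.
  assert (Hc : forall z, continuous (ext f) z) by (intro z; apply continuity_pt_filterlim; apply ext_cont; auto).
  assert (pr0 : Riemann_integrable (ext f) 0 1).
  { apply ex_RInt_Reals_0. exact (ex_RInt_continuous (V := R_CompleteNormedModule) (ext f) 0 1 (fun z _ => Hc z)). }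
  assert (Heq : forall x, Rmin 0 1 <= x <= Rmax 0 1 -> ext f x = f x).
  { intros x Hx. apply ext_id. rewrite Rmin_left, Rmax_right in Hx; try lra. exact Hx. }
  exists (Rcomplements.Riemann_integrable_ext _ _ _ _ Heq pr0).
  rewrite (RInt_Reals _ _ _ pr0). apply RiemannInt_ext. intros x Hx. symmetry; auto.
Qed.

Lemma ContOn01_opp f : ContOn01 (fun s => - f s) -> ContOn01 f.
Proof.
  intros Hf s Hs eps He. destruct (Hf s Hs eps He) as [d [Hd P]]. exists d; split; auto.
  intros t Ht Hts. specialize (P t Ht Hts).
  replace (f t - f s) with (- (- f t - - f s)) by ring. rewrite Rabs_Ropp; auto.
Qed.

Lemma der_lin f g x l1 l2 a b : derivable_pt_lim f x l1 -> derivable_pt_lim g x l2 ->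
  derivable_pt_lim (fun t => a * f t + b * g t) x (a * l1 + b * l2).
Proof.
  intros Hf Hg.
  apply (derivable_pt_lim_plus (fun t => a * f t) (fun t => b * g t)).
  - apply (derivable_pt_lim_scal f a x l1); auto.
  - apply (derivable_pt_lim_scal g b x l2); auto.
Qed.
Theorem proposition5p7
  (H : R -> R -> R)
  (Hcont : JointCont H) (Hcoer : Coercive H) (Hqc : QuasiConvex H)
  (Hint : InteriorCond H)
  (minH : R -> R) (HminH : forall s, I01 s -> IsMinOver (fun _ => True) (H s) (minH s))
  (aH : R) (HaH : IsMaxOver I01 minH aH)
  (cH : R) (HcH : IsMinOver (AdmitsPeriodicSub H) (fun a => a) cH)
  (Hcase : cH > aH \/ (exists k, forall s, I01 s -> minH s = k))
  (sigp sigm : R -> R)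
  (Hsigp : forall s, I01 s -> H s (sigp s) = cH /\ (forall p, H s p = cH -> p <= sigp s))
  (Hsigm : forall s, I01 s -> H s (sigm s) = cH /\ (forall p, H s p = cH -> sigm s <= p)) :
  exists (prm : Riemann_integrable sigm 0 1) (prp : Riemann_integrable sigp 0 1),
    Rmin (- RiemannInt prm) (RiemannInt prp) = 0.
Proof.
  pose proof (above H Hcont Hcoer cH sigp Hsigp) as Ab.
  pose proof (below H Hcont Hcoer cH sigm Hsigm) as Be.
  pose proof (strict H Hqc Hint cH sigp sigm Hsigp Hsigm) as St.
  pose proof (sig_le H cH sigp sigm Hsigp Hsigm) as Le.
  assert (Cp : ContOn01 sigp).
  { apply (hi_cont H Hcont (QC_between H Hqc) cH sigp sigm); auto.
    intros s Hs; apply Hsigp; auto. }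
  assert (Cm : ContOn01 sigm).
  { apply ContOn01_opp.
    apply (hi_cont (fun s p => H s (- p))) with (c := cH) (lo := fun s => - sigp s).
    - intros s p Hs eps He. destruct (Hcont s (- p) Hs eps He) as [d [Hd P]].
      exists d; split; auto. intros s' p' Hs' H1 H2. apply P; auto.
      replace (- p' - - p) with (- (p' - p)) by ring. rewrite Rabs_Ropp; auto.
    - intros s x y z Hs Hxyz. rewrite Rmax_comm. apply QC_between; auto. lra.
    - intros s Hs. simpl. rewrite Ropp_involutive. apply Hsigm; auto.
    - intros s p Hs Hp. apply Be; auto. lra.
    - intros s p Hs Hp. apply Ab; auto. lra.
    - intros s p Hs Hp. apply St; auto. lra.
    - intros s Hs. pose proof (Le s Hs). lra. }
  set (sp := ext sigp). set (sm := ext sigm).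
  assert (Csp : continuity sp) by (intro; apply ext_cont; auto).
  assert (Csm : continuity sm) by (intro; apply ext_cont; auto).
  set (Wp := fun x => RInt sp 0 x). set (Wm := fun x => RInt sm 0 x).
  assert (Dp : forall x, derivable_pt_lim Wp x (sp x)) by (apply Wder; auto).
  assert (Dm : forall x, derivable_pt_lim Wm x (sm x)) by (apply Wder; auto).
  assert (Wp0 : Wp 0 = 0) by (unfold Wp; rewrite RInt_point; reflexivity).
  assert (Wm0 : Wm 0 = 0) by (unfold Wm; rewrite RInt_point; reflexivity).
  destruct (Wint sigp Cp) as [prp Ep].
  destruct (Wint sigm Cm) as [prm Em].
  exists prm, prp. rewrite Ep, Em.
  change (RInt (ext sigp) 0 1) with (Wp 1). change (RInt (ext sigm) 0 1) with (Wm 1).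
  destruct HcH as [[a0 [Ha0 Ea0]] Hmin]. simpl in Ea0. subst a0.
  destruct Ha0 as [u [Hu [Hper Hvisc]]].
  assert (Ap : 0 <= Wp 1).
  { pose proof (mono_up H cH u Hu Hvisc Wp sp Dp Csp) as M.
    assert (M' : u 1 - Wp 1 <= u 0 - Wp 0).
    { apply M; try lra. intros s p Hs Hp. apply Ab; [unfold I01; lra|].
      unfold sp in Hp. rewrite ext_id in Hp; auto. unfold I01; lra. }
    lra. }
  assert (Am : Wm 1 <= 0).
  { pose proof (mono_dn H cH u Hu Hvisc Wm sm Dm Csm) as M.
    assert (M' : u 0 - Wm 0 <= u 1 - Wm 1).
    { apply M; try lra. intros s p Hs Hp. apply Be; [unfold I01; lra|].
      unfold sm in Hp. rewrite ext_id in Hp; auto. unfold I01; lra. }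
    lra. }
  destruct (Req_dec (Wp 1) 0) as [Z|NZp].
  { rewrite Z. apply Rmin_right. lra. }
  destruct (Req_dec (Wm 1) 0) as [Z|NZm].
  { rewrite Z, Ropp_0. apply Rmin_left. lra. }
  exfalso.
  assert (Nd : forall s, I01 s -> minH s < cH -> sigm s < sigp s).
  { intros s Hs Hlt. destruct (Rlt_or_le (sigm s) (sigp s)) as [|Hge]; auto. exfalso.
    destruct (HminH s Hs) as [[x [_ Ex]] _].
    destruct (Rlt_or_le (sigp s) x) as [Hx|Hx].
    { pose proof (Ab s x Hs Hx). lra. }
    destruct (Rlt_or_le x (sigm s)) as [Hx'|Hx'].
    { pose proof (Be s x Hs Hx'). lra. }
    pose proof (Le s Hs). assert (x = sigp s) by lra. subst x.
    rewrite (proj1 (Hsigp s Hs)) in Ex. lra. }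
  assert (Dg : forall s, I01 s -> cH <= minH s -> sigm s = sigp s).
  { intros s Hs Hle. destruct (Rlt_or_le (sigm s) (sigp s)) as [Hlt|Hge].
    - exfalso. pose proof (St s ((sigm s + sigp s) / 2) Hs ltac:(lra)).
      destruct (HminH s Hs) as [_ Hm]. pose proof (Hm ((sigm s + sigp s) / 2) I). lra.
    - pose proof (Le s Hs). lra. }
  assert (ND : forall s, I01 s -> sigm s < sigp s).
  { destruct Hcase as [Hc|[k Hk]].
    - intros s Hs. apply Nd; auto. destruct HaH as [_ Hm]. pose proof (Hm s Hs). lra.
    - destruct (Rlt_or_le k cH) as [Hk'|Hk'].
      + intros s Hs. apply Nd; auto. rewrite Hk; auto.
      + exfalso. assert (E : Wp 1 = Wm 1).
        { unfold Wp, Wm. apply RInt_ext. intros x Hx. rewrite Rmin_left, Rmax_right in Hx by lra.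
          unfold sp, sm. rewrite !ext_id by (unfold I01; lra).
          symmetry. apply Dg; [unfold I01; lra|]. rewrite Hk; auto; unfold I01; lra. }
        lra. }
  (* build a subsolution at a smaller level *)
  set (lam := - Wm 1 / (Wp 1 - Wm 1)).
  assert (Hlam : 0 < lam < 1).
  { unfold lam. split.
    - apply Rdiv_lt_0_compat; lra.
    - apply (Rmult_lt_reg_r (Wp 1 - Wm 1)); [lra|]. unfold Rdiv.
      rewrite Rmult_assoc, Rinv_l; lra. }
  set (th := fun x => lam * sp x + (1 - lam) * sm x).
  set (U := fun x => lam * Wp x + (1 - lam) * Wm x).
  assert (DU : forall x, derivable_pt_lim U x (th x)).
  { intro x. unfold U, th. apply der_lin; auto. }
  assert (U1 : U 1 = 0).
  { unfold U, lam. field. lra. }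
  assert (U0 : U 0 = 0) by (unfold U; rewrite Wp0, Wm0; ring).
  assert (Cth : continuity th).
  { unfold th. apply (continuity_plus (fun x => lam * sp x) (fun x => (1 - lam) * sm x)).
    - apply (continuity_scal sp lam); auto.
    - apply (continuity_scal sm (1 - lam)); auto. }
  set (g := fun s => H s (th s)).
  assert (Cg : ContOn01 g).
  { intros s Hs eps He. destruct (Hcont s (th s) Hs eps He) as [d1 [Hd1 P1]].
    destruct (cont_pt_eps th s (Cth s) d1 Hd1) as [d2 [Hd2 P2]].
    exists (Rmin d1 d2); split; [apply Rmin_pos; auto|].
    intros t Ht Hts. pose proof (Rmin_l d1 d2). pose proof (Rmin_r d1 d2).
    unfold g. apply P1; auto; [lra|]. apply P2. lra. }
  destruct (continuity_ab_maj (ext g) 0 1 ltac:(lra) (fun x _ => ext_cont g Cg x)) as [s0 [Ms0 Hs0]].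
  assert (Ths : forall s, I01 s -> sigm s < th s < sigp s).
  { intros s Hs. pose proof (ND s Hs). unfold th, sp, sm. rewrite !ext_id by auto. nra. }
  assert (Hc' : ext g s0 < cH).
  { rewrite ext_id by (unfold I01; lra). unfold g. apply St; [unfold I01; lra|].
    apply Ths. unfold I01; lra. }
  assert (Adm : AdmitsPeriodicSub H (ext g s0)).
  { exists U. split; [|split].
    - apply cont_ContOn01. intro x. apply derivable_continuous_pt. exists (th x). apply DU.
    - rewrite U0, U1; reflexivity.
    - intros s phi dphi Hs Dphi Cphi [d [Hd Pd]].
      set (r := Rmin d (Rmin s (1 - s))).
      assert (Hr : 0 < r) by (apply Rmin_pos; [lra| apply Rmin_pos; lra]).
      assert (Ed : th s - dphi s = 0).
      { pose (pr := exist (fun l => derivable_pt_lim (fun t => U t - phi t) s l) (th s - dphi s)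
                (derivable_pt_lim_minus U phi s (th s) (dphi s) (DU s) (Dphi s))).
        apply (deriv_maximum (fun t => U t - phi t) (s - r) (s + r) s pr); try lra.
        intros x Hx1 Hx2. pose proof (Rmin_l d (Rmin s (1 - s))).
        pose proof (Rmin_r d (Rmin s (1 - s))). pose proof (Rmin_l s (1 - s)).
        pose proof (Rmin_r s (1 - s)). unfold r in *.
        apply Pd; [lra|]. unfold Rabs; destruct Rcase_abs; lra. }
      replace (dphi s) with (th s) by lra.
      pose proof (Ms0 s ltac:(lra)). rewrite (ext_id g s) in H0 by (unfold I01; lra).
      exact H0. }
  pose proof (Hmin _ Adm). simpl in H0. lra.
Qed.
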